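(* Let $(L_i)_{i\in I}$ be a family of upper continuous lattices with zero, pairwise intersecting in $\{0\}$, and let $L=\coprod^0_{i\in I}L_i$ with each $L_i$ identified with its canonical copy in $L$. Let $\Pi=\prod_{(i,n)\in I\times\omega}L_i$ (ordered componentwise), and for a lattice term $\mathbf{p}$ with variables from $I\times\omega$ and $\vec a=(a_{i,n})\in\Pi$ let $\mathbf{p}(\vec a)\in L$ denote the value of $\mathbf{p}$ in $L$ when each variable $(i,n)$ is assigned $a_{i,n}$. Let $\Lambda$ be an upward directed poset and $(\vec a^{\lambda})_{\lambda\in\Lambda}$ an isotone family of elements of $\Pi$ with supremum $\vec a$ in $\Pi$. Then for every lattice term $\mathbf{p}$ on $I\times\omega$, $\mathbf{p}(\vec a)=\bigvee_{\lambda\in\Lambda}\mathbf{p}(\vec a^{\lambda})$ in $L$.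
   Context: $\coprod^0$ denotes the coproduct in the category of lattices with zero and zero-preserving homomorphisms; $\omega$ is the set of natural numbers. A lattice $M$ is upper continuous if for each $a\in M$ and each upward directed subset $\{x_j: j\in J\}$ of $M$ that has a join, $a\wedge\bigvee_{j}x_j=\bigvee_j(a\wedge x_j)$. *)

(* Defs.v *)
From HB Require Import structures.
From mathcomp Require Import all_boot all_order.

Import Order.TTheory.
Local Open Scope order_scope.

Definition is_lub {T : Type} (le : T -> T -> Prop) (X : T -> Prop) (s : T) : Prop :=
  (forall x, X x -> le x s) /\ (forall u, (forall x, X x -> le x u) -> le s u).

Definition up_directed {T : Type} (le : T -> T -> Prop) (X : T -> Prop) : Prop :=
  (exists x, X x) /\
  (forall x y, X x -> X y -> exists z, X z /\ le x z /\ le y z).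

Definition upper_continuous {d : Order.disp_t} (M : latticeType d) : Prop :=
  forall (a : M) (X : M -> Prop) (s : M),
    up_directed (fun x y => x <= y) X ->
    is_lub (fun x y => x <= y) X s ->
    is_lub (fun x y => x <= y) (fun y => exists x, X x /\ y = a `&` x) (a `&` s).

Definition zlat_hom {d d' : Order.disp_t} {A : bLatticeType d} {B : bLatticeType d'}
  (f : A -> B) : Prop :=
  f \bot = \bot /\ (forall x y, f (x `&` y) = f x `&` f y) /\
  (forall x y, f (x `|` y) = f x `|` f y).

Definition is_coproduct0 {I : Type} {d : I -> Order.disp_t}
  (Li : forall i, bLatticeType (d i)) {dL : Order.disp_t} (L : bLatticeType dL)
  (e : forall i, Li i -> L) : Prop :=
  (forall i, zlat_hom (e i)) /\
  (forall (dM : Order.disp_t) (M : bLatticeType dM) (f : forall i, Li i -> M),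
      (forall i, zlat_hom (f i)) ->
      exists h : L -> M, zlat_hom h /\ (forall i x, h (e i x) = f i x) /\
        (forall h' : L -> M, zlat_hom h' -> (forall i x, h' (e i x) = f i x) ->
           forall y, h' y = h y)).

Inductive lterm (V : Type) : Type :=
  | LVar : V -> lterm V
  | LMeet : lterm V -> lterm V -> lterm V
  | LJoin : lterm V -> lterm V -> lterm V.
Arguments LVar {V}. Arguments LMeet {V}. Arguments LJoin {V}.

Fixpoint leval {V : Type} {d : Order.disp_t} {M : latticeType d}
  (v : V -> M) (p : lterm V) : M :=
  match p with
  | LVar x => v x
  | LMeet p q => leval v p `&` leval v q
  | LJoin p q => leval v p `|` leval v q
  end.

(* Main.v *)
Require Import Defs.
From HB Require Import structures.
From mathcomp Require Import all_boot all_order.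
From mathcomp Require Import boolp.
From Stdlib Require List.
Import Order.TTheory.
Local Open Scope order_scope.

Set Implicit Arguments.
Unset Strict Implicit.

Section Word.
Context (I : Type) (d : I -> Order.disp_t) (Li : forall i, bLatticeType (d i)).

Definition V := {i : I & Li i}.
Definition Term := lterm V.

Definition proj (i : I) (s : V) : option (Li i) :=
  match pselect (projT1 s = i) with
  | left E => Some (eq_rect (projT1 s) (fun k => Li k) (projT2 s) i E)
  | right _ => None
  end.

Lemma proj_same i (x : Li i) : proj i (existT _ i x) = Some x.
Proof.
rewrite /proj; case: pselect => //= E.
by rewrite (Prop_irrelevance E erefl).
Qed.

Lemma proj_diff i j (x : Li j) : j <> i -> proj i (existT _ j x) = None.
Proof. by rewrite /proj; case: pselect. Qed.

Lemma proj_some i s y : proj i s = Some y -> s = existT _ i y.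
Proof.
case: s => j x; rewrite /proj; case: pselect => //= E [<-].
by case: _ / E.
Qed.

Fixpoint lc (i : I) (p : Term) : Li i :=
  match p with
  | LVar s => match proj i s with Some x => x | None => \bot end
  | LMeet p q => lc i p `&` lc i q
  | LJoin p q => lc i p `|` lc i q
  end.

Section Opt.
Context (dd : Order.disp_t) (X : bLatticeType dd).
Definition oleq (a b : option X) : Prop :=
  match b with None => True | Some y => match a with Some x => x <= y | None => False end end.
Definition omeet (a b : option X) : option X :=
  match a, b with None, _ => b | _, None => a | Some x, Some y => Some (x `&` y) end.
Definition ojoin (a b : option X) : option X :=
  match a, b with Some x, Some y => Some (x `|` y) | _, _ => None end.

Lemma oleq_refl a : oleq a a. Proof. by case: a => //= x; rewrite le_refl. Qed.
Lemma oleq_trans a b c : oleq a b -> oleq b c -> oleq a c.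
Proof. by case: c => // z; case: b => // y; case: a => // x; apply: le_trans. Qed.
Lemma oleq_bot0 a : oleq (Some \bot) a. Proof. by case: a => //= y; rewrite le0x. Qed.
Lemma oleq_None a : oleq None a -> a = None. Proof. by case: a. Qed.
Lemma oleq_bot a : oleq a (Some \bot) -> a = Some \bot.
Proof. by case: a => //= x; rewrite lex0 => /eqP ->. Qed.
Lemma oleq_Some a c : oleq a (Some c) -> exists x, a = Some x /\ x <= c.
Proof. by case: a => //= x h; exists x. Qed.
Lemma omeet_lel a b : oleq (omeet a b) a.
Proof. by case: a; case: b => //= *; rewrite ?le_refl ?leIl. Qed.
Lemma omeet_ler a b : oleq (omeet a b) b.
Proof. by case: a; case: b => //= *; rewrite ?le_refl ?leIr. Qed.
Lemma omeet_glb a b c : oleq c a -> oleq c b -> oleq c (omeet a b).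
Proof.
case: a; case: b => //=; case: c => //= *; by rewrite ?lexI; apply/andP.
Qed.
Lemma omeet_mono a b a' b' : oleq a a' -> oleq b b' -> oleq (omeet a b) (omeet a' b').
Proof.
move=> h1 h2; apply: omeet_glb.
  exact: oleq_trans (omeet_lel _ _) h1.
exact: oleq_trans (omeet_ler _ _) h2.
Qed.
Lemma ojoin_uel a b : oleq a (ojoin a b).
Proof. by case: a; case: b => //= *; rewrite leUl. Qed.
Lemma ojoin_uer a b : oleq b (ojoin a b).
Proof. by case: a; case: b => //= *; rewrite leUr. Qed.
Lemma ojoin_lub a b c : oleq a c -> oleq b c -> oleq (ojoin a b) c.
Proof. by case: c => // z; case: a => // x; case: b => //= y h1 h2; rewrite leUx h1 h2. Qed.
Lemma ojoin_mono a b a' b' : oleq a a' -> oleq b b' -> oleq (ojoin a b) (ojoin a' b').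
Proof.
move=> h1 h2; apply: ojoin_lub.
  exact: oleq_trans h1 (ojoin_uel _ _).
exact: oleq_trans h2 (ojoin_uer _ _).
Qed.
Lemma omeet_botl b : omeet (Some \bot) b = Some \bot.
Proof. by case: b => //= y; rewrite meet0x. Qed.
Lemma omeet_botr a : omeet a (Some \bot) = Some \bot.
Proof. by case: a => //= y; rewrite meetx0. Qed.
End Opt.

Definition Ucov := forall i, option (Li i).

Definition norm (W : Ucov) : Ucov :=
  if pselect (exists k, W k = Some \bot) then (fun _ => Some \bot) else W.

Fixpoint U (p : Term) : Ucov :=
  match p with
  | LVar s => if projT2 s == \bot then (fun _ => Some \bot) else (fun i => proj i s)
  | LMeet p q => norm (fun k => omeet (U p k) (U q k))
  | LJoin p q => fun k => ojoin (U p k) (U q k)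
  end.

Lemma norm_le (W : Ucov) i : oleq (norm W i) (W i).
Proof. rewrite /norm; destruct (pselect _); [exact: oleq_bot0 | exact: oleq_refl]. Qed.

Lemma Z1 p i : U p i = Some \bot -> forall k, U p k = Some \bot.
Proof.
elim: p i => [s|p IHp q IHq|p IHp q IHq] i /=.
- case: eqP => // Hs; move/proj_some => E; subst s; by case: Hs.
- rewrite /norm; destruct (pselect _) as [Hn|Hn] => // Hi; exfalso; apply Hn; by exists i.
- case Ep: (U p i) => [x|] //; case Eq: (U q i) => [y|] //= [] /eqP.
  rewrite join_eq0 => /andP [/eqP Hx /eqP Hy]; subst x y.
  move=> k; by rewrite (IHp _ Ep k) (IHq _ Eq k) /= joinxx.
Qed.

Lemma C1 p i u : U p i = Some u -> lc i p <= u /\ forall k, k <> i -> lc k p = \bot.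
Proof.
elim: p i u => [[j x]|p IHp q IHq|p IHp q IHq] i u /=.
- case: eqP => /= Hx.
  + move=> [<-]; subst x; split.
    * rewrite /proj; case: pselect => //= E; first by case: _ / E.
    * move=> k _; rewrite /proj; case: pselect => //= E; by case: _ / E.
  + move/proj_some => E; have ? : j = i by move: E; case.
    subst j; have := congr1 (proj i) E; rewrite !proj_same => -[?].
    subst x; split; first exact: le_refl.
    move=> k Hk; rewrite proj_diff //; exact: nesym.
- rewrite /norm; destruct (pselect _) as [[k0 Hk0]|Hn].
  + move=> [<-].
    suff H0 : forall j, lc j p `&` lc j q = \bot.
      by split; [rewrite H0 | move=> k _; exact: H0].
    move: Hk0; case Ep: (U p k0) => [a|]; case Eq: (U q k0) => [b|] //=.
    * move=> [Hab] j; have [Ha1 Ha2] := IHp _ _ Ep; have [Hb1 Hb2] := IHq _ _ Eq.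
      case: (pselect (j = k0)) => [->|Hj].
        by apply/eqP; rewrite -lex0 -Hab leI2.
      by rewrite Ha2 // meet0x.
    * move=> [Ha]; subst a => j; have [Ha1 Ha2] := IHp _ _ Ep.
      case: (pselect (j = k0)) => [->|Hj]; last by rewrite Ha2 // meet0x.
      by apply/eqP; rewrite -lex0 (le_trans (leIl _ _) Ha1).
    * move=> [Hb]; subst b => j; have [Hb1 Hb2] := IHq _ _ Eq.
      case: (pselect (j = k0)) => [->|Hj]; last by rewrite Hb2 // meetx0.
      by apply/eqP; rewrite -lex0 (le_trans (leIr _ _) Hb1).
  + rewrite /=; case Ep: (U p i) => [a|]; case Eq: (U q i) => [b|] //=.
    * move=> [<-]; have [Ha1 Ha2] := IHp _ _ Ep; have [Hb1 Hb2] := IHq _ _ Eq.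
      split; first by rewrite leI2.
      by move=> k Hk; rewrite Ha2 // meet0x.
    * move=> [<-]; have [Ha1 Ha2] := IHp _ _ Ep; split.
        exact: le_trans (leIl _ _) Ha1.
      by move=> k Hk; rewrite Ha2 // meet0x.
    * move=> [<-]; have [Hb1 Hb2] := IHq _ _ Eq; split.
        exact: le_trans (leIr _ _) Hb1.
      by move=> k Hk; rewrite Hb2 // meetx0.
- case Ep: (U p i) => [a|]; case Eq: (U q i) => [b|] //= [<-].
  have [Ha1 Ha2] := IHp _ _ Ep; have [Hb1 Hb2] := IHq _ _ Eq.
  split; first by rewrite leU2.
  by move=> k Hk; rewrite Ha2 // Hb2 // joinxx.
Qed.

Lemma C2 q i : oleq (Some (lc i q)) (U q i) /\
  (lc i q <> \bot -> forall k, k <> i -> U q k = None).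
Proof.
elim: q i => [[j x]|p IHp q IHq|p IHp q IHq] i /=.
- case: (pselect (j = i)) => [E|E].
  + subst j; case: eqP => [Hx|Hx] /=; rewrite ?proj_same.
      by subst x; split; [exact: le_refl | ].
    split; first exact: oleq_refl.
    move=> _ k Hk; rewrite proj_diff //; exact: nesym.
  + rewrite proj_diff //; split; first by case: eqP => _ /=; rewrite ?proj_diff //; exact: oleq_bot0.
    by move=> H; case: H.
- have Hmeet : lc i p `&` lc i q <> \bot ->
      ~ (exists k, omeet (U p k) (U q k) = Some \bot).
    move=> Hne [k0 Hk0]; apply: Hne.
    have Hn : U (LMeet p q) k0 = Some \bot.
      by rewrite /= /norm; destruct (pselect _) as [|Hn] => //; exfalso; apply Hn; exists k0.
    change (lc i (LMeet p q) = \bot).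
    have [H1 H2] := C1 Hn; case: (pselect (i = k0)) => [->|Hik].
      by apply/eqP; rewrite -lex0.
    by rewrite H2.
  have [Hp1 Hp2] := IHp i; have [Hq1 Hq2] := IHq i; split.
  + rewrite /norm; destruct (pselect _) as [Hz|Hz].
      case: (pselect (lc i p `&` lc i q = \bot)) => [->|Hne]; first exact: oleq_refl.
      by exfalso; apply: (Hmeet Hne).
    exact: (omeet_mono Hp1 Hq1).
  + move=> Hne k Hk; rewrite /norm; destruct (pselect _) as [Hz|Hz].
      by exfalso; apply: (Hmeet Hne).
    have Hp0 : lc i p <> \bot by move=> E; apply: Hne; rewrite E meet0x.
    have Hq0 : lc i q <> \bot by move=> E; apply: Hne; rewrite E meetx0.
    by rewrite /= (Hp2 Hp0 k Hk) (Hq2 Hq0 k Hk).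
- have [Hp1 Hp2] := IHp i; have [Hq1 Hq2] := IHq i; split.
    exact: (ojoin_mono Hp1 Hq1).
  move=> Hne k Hk.
  case: (pselect (lc i p = \bot)) => Hp0.
    case: (pselect (lc i q = \bot)) => Hq0.
      by exfalso; apply: Hne; rewrite Hp0 Hq0 joinxx.
    by rewrite (Hq2 Hq0 k Hk); case: (U p k).
  by rewrite (Hp2 Hp0 k Hk).
Qed.

Inductive tle : Term -> Term -> Prop :=
  | tle_cov p q i u : U p i = Some u -> u <= lc i q -> tle p q
  | tle_joinl p0 p1 q : tle p0 q -> tle p1 q -> tle (LJoin p0 p1) q
  | tle_meetl0 p0 p1 q : tle p0 q -> tle (LMeet p0 p1) q
  | tle_meetl1 p0 p1 q : tle p1 q -> tle (LMeet p0 p1) q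
  | tle_joinr0 p q0 q1 : tle p q0 -> tle p (LJoin q0 q1)
  | tle_joinr1 p q0 q1 : tle p q1 -> tle p (LJoin q0 q1)
  | tle_meetr p q0 q1 : tle p q0 -> tle p q1 -> tle p (LMeet q0 q1).

Lemma tle_cov' p q i c : oleq (U p i) (Some c) -> c <= lc i q -> tle p q.
Proof. move=> /oleq_Some [x [Hx Hxc]] Hc; apply: (tle_cov Hx); exact: le_trans Hxc Hc. Qed.

Lemma Umeet_le p q k : oleq (U (LMeet p q) k) (omeet (U p k) (U q k)).
Proof. exact: (norm_le (fun k => omeet (U p k) (U q k)) k). Qed.

Lemma cover_mono p q : tle p q ->
  (forall i, lc i p <= lc i q) /\ (forall i, oleq (U p i) (U q i)).
Proof.
elim => {p q}.
- move=> p q i u Hu Huq; have [H1 H2] := C1 Hu; split.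
    move=> k; case: (pselect (k = i)) => [->|Hk]; first exact: le_trans H1 Huq.
    by rewrite H2 // le0x.
  move=> k; case: (pselect (lc i q = \bot)) => Hq0.
    have Hu0 : u = \bot by apply/eqP; rewrite -lex0 -Hq0.
    subst u; rewrite (Z1 Hu k); exact: oleq_bot0.
  have [Hq1 Hq2] := C2 q i.
  case: (pselect (k = i)) => [->|Hk]; last by rewrite (Hq2 Hq0 k Hk); case: (U p k).
  rewrite Hu; exact: oleq_trans Hq1.
- move=> p0 p1 q _ [A0 B0] _ [A1 B1]; split => i /=.
    by rewrite leUx A0 A1.
  exact: ojoin_lub.
- move=> p0 p1 q _ [A0 B0]; split => i /=.
    exact: le_trans (leIl _ _) (A0 i).
  exact: oleq_trans (Umeet_le _ _ _) (oleq_trans (omeet_lel _ _) (B0 i)).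
- move=> p0 p1 q _ [A0 B0]; split => i /=.
    exact: le_trans (leIr _ _) (A0 i).
  exact: oleq_trans (Umeet_le _ _ _) (oleq_trans (omeet_ler _ _) (B0 i)).
- move=> p q0 q1 _ [A0 B0]; split => i /=.
    exact: le_trans (A0 i) (leUl _ _).
  exact: oleq_trans (B0 i) (ojoin_uel _ _).
- move=> p q0 q1 _ [A0 B0]; split => i /=.
    exact: le_trans (A0 i) (leUr _ _).
  exact: oleq_trans (B0 i) (ojoin_uer _ _).
- move=> p q0 q1 _ [A0 B0] _ [A1 B1]; split => i /=.
    by rewrite lexI A0 A1.
  rewrite /norm; destruct (pselect _) as [[k0 Hk0]|Hz].
    have H := omeet_glb (B0 k0) (B1 k0); rewrite Hk0 in H.
    rewrite (Z1 (oleq_bot H) i); exact: oleq_refl.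
  exact: omeet_glb.
Qed.

Lemma tle_refl p : tle p p.
Proof.
elim: p => [[j x]|p IHp q IHq|p IHp q IHq].
- apply: (@tle_cov' _ _ j x) => /=; last by rewrite proj_same le_refl.
  case: eqP => [->|_] /=; first exact: le_refl.
  by rewrite proj_same /= le_refl.
- by apply: tle_meetr; [apply: tle_meetl0 | apply: tle_meetl1].
- by apply: tle_joinl; [apply: tle_joinr0 | apply: tle_joinr1].
Qed.

Lemma joinl_inv p0 p1 r : tle (LJoin p0 p1) r -> tle p0 r /\ tle p1 r.
Proof.
move=> H; remember (LJoin p0 p1) as q eqn:Eq; move: p0 p1 Eq.
elim: H => {q r}.
- move=> p q i u Hu Huq p0 p1 E; subst p; move: Hu => /=.
  case E0: (U p0 i) => [a|]; case E1: (U p1 i) => [b|] //= [Hu].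
  split; [apply: (tle_cov E0) | apply: (tle_cov E1)]; apply: le_trans Huq;
    rewrite -Hu; [exact: leUl | exact: leUr].
- by move=> ? ? ? H0 _ H1 _ ? ? [<- <-].
- by [].
- by [].
- move=> p q0 q1 _ IH p0 p1 E; have [A B] := IH _ _ E.
  by split; apply: tle_joinr0.
- move=> p q0 q1 _ IH p0 p1 E; have [A B] := IH _ _ E.
  by split; apply: tle_joinr1.
- move=> p q0 q1 _ IH0 _ IH1 p0 p1 E; have [A0 B0] := IH0 _ _ E; have [A1 B1] := IH1 _ _ E.
  by split; apply: tle_meetr.
Qed.

Lemma tle_trans p q r : tle p q -> tle q r -> tle p r.
Proof.
move=> H; elim: H r => {p q}.
- move=> p q i u Hu Huq r Hqr; have [A _] := cover_mono Hqr.
  apply: (tle_cov Hu); exact: le_trans Huq (A i).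
- move=> p0 p1 q _ IH0 _ IH1 r Hr; apply: tle_joinl; [exact: IH0|exact: IH1].
- move=> p0 p1 q _ IH r Hr; apply: tle_meetl0; exact: IH.
- move=> p0 p1 q _ IH r Hr; apply: tle_meetl1; exact: IH.
- move=> p q0 q1 _ IH r Hr; have [A _] := joinl_inv Hr; exact: IH.
- move=> p q0 q1 _ IH r Hr; have [_ A] := joinl_inv Hr; exact: IH.
- move=> p q0 q1 H0 IH0 H1 IH1 r Hr.
  have Hpq : tle p (LMeet q0 q1) by apply: tle_meetr.
  have [_ Bpq] := cover_mono Hpq.
  remember (LMeet q0 q1) as q eqn:Eq; move: (Eq).
  elim: Hr => {r}.
  + move=> q' r i u Hu Huq E; rewrite E -Eq in Hu.
    have := Bpq i; rewrite Hu => /oleq_Some [x [Hx Hxu]].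
    apply: (tle_cov Hx); exact: le_trans Hxu Huq.
  + by move=> ? ? ? ? ? ? ? E; subst.
  + by move=> ? ? r H _ [E0 _]; rewrite E0 in H; apply: IH0.
  + by move=> ? ? r H _ [_ E0]; rewrite E0 in H; apply: IH1.
  + by move=> q' r0 r1 _ IH E; apply: tle_joinr0; apply: IH.
  + by move=> q' r0 r1 _ IH E; apply: tle_joinr1; apply: IH.
  + by move=> q' r0 r1 _ IHa _ IHb E; apply: tle_meetr; [apply: IHa|apply: IHb].
Qed.

End Word.

Unset Implicit Arguments.
Section Sound.
Context (I : Type) (d : I -> Order.disp_t) (Li : forall i, bLatticeType (d i)).
Context (dM : Order.disp_t) (M : bLatticeType dM) (f : forall i, Li i -> M)
  (Hf : forall i, zlat_hom (f i)).

Definition evalM (t : Term Li) : M := leval (fun s : V Li => f (projT1 s) (projT2 s)) t.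

Lemma f_bot i : f i \bot = \bot. Proof. by case: (Hf i). Qed.
Lemma f_meet i x y : f i (x `&` y) = f i x `&` f i y. Proof. by case: (Hf i) => _ []. Qed.
Lemma f_join i x y : f i (x `|` y) = f i x `|` f i y. Proof. by case: (Hf i) => _ []. Qed.
Lemma f_mono i x y : x <= y -> f i x <= f i y.
Proof. by move=> /meet_idPl <-; rewrite f_meet leIr. Qed.

Lemma S1 p i u : U p i = Some u -> evalM p <= f i u.
Proof.
elim: p i u => [[j x]|p IHp q IHq|p IHp q IHq] i u /=.
- rewrite /evalM /=; case: eqP => [->|Hx] /=.
    by move=> _; rewrite f_bot le0x.
  move=> Hp; have E := proj_some Hp; have ? : j = i by move: E; case.
  subst j; rewrite proj_same in Hp; case: Hp => ->; exact: le_refl.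
- rewrite /norm; destruct (pselect _) as [[k0 Hk0]|Hn].
  + move=> _; apply: le_trans (_ : _ <= \bot) (le0x _).
    move: Hk0; case Ep: (U p k0) => [a|]; case Eq: (U q k0) => [b|] //= [Hab].
    * rewrite -(f_bot k0) -Hab f_meet; apply: leI2; [exact: IHp Ep | exact: IHq Eq].
    * subst a; rewrite -(f_bot k0); exact: le_trans (leIl _ _) (IHp _ _ Ep).
    * subst b; rewrite -(f_bot k0); exact: le_trans (leIr _ _) (IHq _ _ Eq).
  + rewrite /=; case Ep: (U p i) => [a|]; case Eq: (U q i) => [b|] //= [<-].
    * rewrite f_meet; apply: leI2; [exact: IHp Ep | exact: IHq Eq].
    * exact: le_trans (leIl _ _) (IHp _ _ Ep).
    * exact: le_trans (leIr _ _) (IHq _ _ Eq).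
- case Ep: (U p i) => [a|]; case Eq: (U q i) => [b|] //= [<-].
  rewrite f_join; apply: leU2; [exact: IHp Ep | exact: IHq Eq].
Qed.

Lemma S2 p i : f i (lc i p) <= evalM p.
Proof.
elim: p => [[j x]|p IHp q IHq|p IHp q IHq] /=.
- rewrite /evalM /=; case: (pselect (j = i)) => [E|E].
    subst j; rewrite proj_same; exact: le_refl.
  by rewrite proj_diff // f_bot le0x.
- by rewrite f_meet; apply: leI2.
- by rewrite f_join; apply: leU2.
Qed.

Lemma sound p q : tle p q -> evalM p <= evalM q.
Proof.
elim => {p q}.
- move=> p q i u Hu Huq; apply: le_trans (S1 _ _ _ Hu) _.
  exact: le_trans (f_mono _ _ _ Huq) (S2 q i).
- by move=> p0 p1 q _ H0 _ H1; rewrite /evalM /= leUx; apply/andP; split.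
- by move=> p0 p1 q _ H0; apply: le_trans (leIl _ _) H0.
- by move=> p0 p1 q _ H0; apply: le_trans (leIr _ _) H0.
- by move=> p q0 q1 _ H0; apply: le_trans H0 (leUl _ _).
- by move=> p q0 q1 _ H0; apply: le_trans H0 (leUr _ _).
- by move=> p q0 q1 _ H0 _ H1; rewrite /evalM /= lexI; apply/andP; split.
Qed.

End Sound.

Section Model.
Context (I : Type) (d : I -> Order.disp_t) (Li : forall i, bLatticeType (d i)) (i0 : I).

Lemma tle_meet_mono (p q p' q' : Term Li) : tle p p' -> tle q q' -> tle (LMeet p q) (LMeet p' q').
Proof. by move=> H1 H2; apply: tle_meetr; [apply: tle_meetl0|apply: tle_meetl1]. Qed.
Lemma tle_join_mono (p q p' q' : Term Li) : tle p p' -> tle q q' -> tle (LJoin p q) (LJoin p' q').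
Proof. by move=> H1 H2; apply: tle_joinl; [apply: tle_joinr0|apply: tle_joinr1]. Qed.

Definition down (t : Term Li) : Term Li -> Prop := fun s => tle s t.
Definition Mty := {P : Term Li -> Prop | exists t, P = down t}.
Definition MT (j : I) : Type := Mty.
HB.instance Definition _ := gen_eqMixin (MT i0).
HB.instance Definition _ := gen_choiceMixin (MT i0).

Definition rep (P : Mty) : Term Li := proj1_sig (cid (proj2_sig P)).
Lemma rep_spec P : proj1_sig P = down (rep P).
Proof. rewrite /rep; case: (cid _) => /= x Hx; exact: Hx. Qed.
Definition cls (t : Term Li) : Mty := exist _ (down t) (ex_intro _ t erefl).

Lemma cls_rep P : cls (rep P) = P.
Proof. case: P => P0 HP; apply: eq_exist; rewrite -(rep_spec (exist _ P0 HP)) //. Qed.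

Lemma cls_eq s t : tle s t -> tle t s -> cls s = cls t.
Proof.
move=> H1 H2; apply: eq_exist; apply: funext => r; apply: propext; rewrite /down; split => H.
  exact: tle_trans H H1.
exact: tle_trans H H2.
Qed.

Definition Mle (P Q : Mty) : bool := `[< forall s, proj1_sig P s -> proj1_sig Q s >].

Lemma Mle_cls s t : Mle (cls s) (cls t) <-> tle s t.
Proof.
rewrite /Mle; split.
  move/asboolP => /= H; apply: H; exact: tle_refl.
move=> H; apply/asboolP => /= r Hr; exact: tle_trans Hr H.
Qed.

Lemma rep_equiv t : tle t (rep (cls t)) /\ tle (rep (cls t)) t.
Proof.
have E := rep_spec (cls t); rewrite /= in E.
split.
  have : down t t by exact: tle_refl.
  by rewrite E.
have : down (rep (cls t)) (rep (cls t)) by exact: tle_refl.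
by rewrite -E.
Qed.

Lemma Mle_refl : reflexive (Mle : rel (MT i0)).
Proof. move=> P; rewrite -(cls_rep P); apply/Mle_cls; exact: tle_refl. Qed.
Lemma Mle_anti : antisymmetric (Mle : rel (MT i0)).
Proof.
move=> P Q; rewrite -(cls_rep P) -(cls_rep Q) => /andP [/Mle_cls H1 /Mle_cls H2].
exact: cls_eq.
Qed.
Lemma Mle_trans : transitive (Mle : rel (MT i0)).
Proof.
move=> Q P R; rewrite -(cls_rep P) -(cls_rep Q) -(cls_rep R) => /Mle_cls H1 /Mle_cls H2.
apply/Mle_cls; exact: tle_trans H1 H2.
Qed.

Fact Mdisp : Order.disp_t. Proof. exact: Order.Disp tt tt. Qed.

HB.instance Definition _ := Order.Le_isPOrder.Build Mdisp (MT i0) Mle_refl Mle_anti Mle_trans.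

Definition Mmeet (P Q : MT i0) : MT i0 := cls (LMeet (rep P) (rep Q)).
Definition Mjoin (P Q : MT i0) : MT i0 := cls (LJoin (rep P) (rep Q)).

Lemma Mmeet_cls s t : Mmeet (cls s) (cls t) = cls (LMeet s t).
Proof.
have [A1 A2] := rep_equiv s; have [B1 B2] := rep_equiv t.
by apply: cls_eq; apply: tle_meet_mono.
Qed.
Lemma Mjoin_cls s t : Mjoin (cls s) (cls t) = cls (LJoin s t).
Proof.
have [A1 A2] := rep_equiv s; have [B1 B2] := rep_equiv t.
by apply: cls_eq; apply: tle_join_mono.
Qed.

Lemma MmeetP (x y z : MT i0) : (x <= Mmeet y z)%O = (x <= y)%O && (x <= z)%O.
Proof.
rewrite -(cls_rep x) -(cls_rep y) -(cls_rep z) Mmeet_cls.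
change (Mle (cls (rep x)) (cls (LMeet (rep y) (rep z))) =
  Mle (cls (rep x)) (cls (rep y)) && Mle (cls (rep x)) (cls (rep z))).
apply/idP/andP.
  move/Mle_cls => H; split; apply/Mle_cls; apply: tle_trans H _;
    [apply: tle_meetl0 | apply: tle_meetl1]; exact: tle_refl.
by move=> [/Mle_cls H1 /Mle_cls H2]; apply/Mle_cls; apply: tle_meetr.
Qed.

Lemma MjoinP (x y z : MT i0) : (Mjoin x y <= z)%O = (x <= z)%O && (y <= z)%O.
Proof.
rewrite -(cls_rep x) -(cls_rep y) -(cls_rep z) Mjoin_cls.
change (Mle (cls (LJoin (rep x) (rep y))) (cls (rep z)) =
  Mle (cls (rep x)) (cls (rep z)) && Mle (cls (rep y)) (cls (rep z))).
apply/idP/andP.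
  move/Mle_cls => H; split; apply/Mle_cls; apply: tle_trans _ H;
    [apply: tle_joinr0 | apply: tle_joinr1]; exact: tle_refl.
by move=> [/Mle_cls H1 /Mle_cls H2]; apply/Mle_cls; apply: tle_joinl.
Qed.

HB.instance Definition _ := Order.POrder_MeetJoin_isLattice.Build Mdisp (MT i0) MmeetP MjoinP.

Definition Mbot : MT i0 := cls (@LVar (V Li) (existT _ i0 (\bot : Li i0))).

Lemma zero_le (j : I) (t : Term Li) : tle (@LVar (V Li) (existT _ j (\bot : Li j))) t.
Proof. apply: (@tle_cov' _ _ _ _ _ j \bot) => /=; [by rewrite eqxx /= le_refl | exact: le0x]. Qed.

Lemma Mle0x (x : MT i0) : (Mbot <= x)%O.
Proof. rewrite -(cls_rep x); apply/Mle_cls; exact: zero_le. Qed.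

HB.instance Definition _ := Order.hasBottom.Build Mdisp (MT i0) Mle0x.

End Model.

Section Coprod.
Context (I : Type) (d : I -> Order.disp_t) (Li : forall i, bLatticeType (d i)) (i0 : I).
Context (dL : Order.disp_t) (L : bLatticeType dL) (e : forall i, Li i -> L)
  (Hcop : is_coproduct0 Li L e).

Notation MM := (MT I d Li i0).
Notation var i x := (@LVar (V Li) (existT _ i x)).

Lemma Uvar_le i (x : Li i) : oleq (U (var i x) i) (Some x).
Proof.
rewrite /=; case: eqP => [->|_] /=; first exact: le_refl.
rewrite proj_same; exact: le_refl.
Qed.

Lemma lc_var i (x : Li i) : lc i (var i x) = x.
Proof. by rewrite /= proj_same. Qed.

Lemma tle_var i (x y : Li i) : x <= y -> tle (var i x) (var i y).
Proof. move=> H; apply: (tle_cov' (Uvar_le _ x)); by rewrite lc_var. Qed.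

Definition fM (i : I) (x : Li i) : MM := cls I d Li (var i x).

Lemma fM_hom i : zlat_hom (fM i).
Proof.
split; [|split].
- by apply: cls_eq; apply: zero_le.
- move=> x y; change (fM i (x `&` y) = Mmeet I d Li i0 (cls I d Li (var i x)) (cls I d Li (var i y))).
  rewrite Mmeet_cls; apply: cls_eq.
    by apply: tle_meetr; apply: tle_var; [exact: leIl | exact: leIr].
  apply: (tle_cov' (i := i) (c := x `&` y)); last by rewrite lc_var le_refl.
  exact: oleq_trans (Umeet_le _ _ _) (omeet_mono (Uvar_le _ x) (Uvar_le _ y)).
- move=> x y; change (fM i (x `|` y) = Mjoin I d Li i0 (cls I d Li (var i x)) (cls I d Li (var i y))).
  rewrite Mjoin_cls; apply: cls_eq.
    apply: (tle_cov' (Uvar_le _ _)); by rewrite /= !proj_same le_refl.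
  by apply: tle_joinl; apply: tle_var; [exact: leUl | exact: leUr].
Qed.

Lemma zhom_mono dA dB (A : bLatticeType dA) (B : bLatticeType dB) (h : A -> B) :
  zlat_hom h -> forall x y, x <= y -> h x <= h y.
Proof. by move=> [_ [Hm _]] x y /meet_idPl <-; rewrite Hm leIr. Qed.

Lemma zhom_id dA (A : bLatticeType dA) : zlat_hom (fun x : A => x).
Proof. by []. Qed.

Lemma zhom_comp dA dB dC (A : bLatticeType dA) (B : bLatticeType dB) (C : bLatticeType dC)
  (h : A -> B) (g : B -> C) : zlat_hom h -> zlat_hom g -> zlat_hom (fun x => g (h x)).
Proof.
move=> [h0 [hm hj]] [g0 [gm gj]]; split; [|split].
- by rewrite h0 g0.
- by move=> x y; rewrite hm gm.
- by move=> x y; rewrite hj gj.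
Qed.

Definition evL (t : Term Li) : L := evalM I d Li dL L e t.

Lemma evL_sound s t : tle s t -> evL s <= evL t.
Proof. exact: (sound I d Li dL L e (proj1 Hcop)). Qed.

Lemma evL_rep t : evL (rep I d Li (cls I d Li t)) = evL t.
Proof. have [A B] := rep_equiv I d Li t; apply: le_anti; rewrite !evL_sound //. Qed.

Definition gM (P : MM) : L := evL (rep I d Li P).

Lemma gM_hom : zlat_hom gM.
Proof.
split; [|split].
- rewrite /gM; change (evL (rep I d Li (cls I d Li (var i0 (\bot : Li i0)))) = \bot).
  by rewrite evL_rep /evL /evalM /= (proj1 (proj1 Hcop i0)).
- move=> P Q; rewrite /gM; change (evL (rep I d Li (cls I d Li (LMeet (rep I d Li P) (rep I d Li Q)))) =
     evL (rep I d Li P) `&` evL (rep I d Li Q)).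
  by rewrite evL_rep.
- move=> P Q; rewrite /gM; change (evL (rep I d Li (cls I d Li (LJoin (rep I d Li P) (rep I d Li Q)))) =
     evL (rep I d Li P) `|` evL (rep I d Li Q)).
  by rewrite evL_rep.
Qed.

Lemma gen_compl :
  (forall y : L, y = evL (rep I d Li (proj1_sig (cid ((proj2 Hcop) _ MM fM fM_hom)) y))) /\
  (forall s t, evL s <= evL t -> tle s t).
Proof.
case: (cid _) => /= h [Hh [Hhe _]].
have heval : forall t, h (evL t) = cls I d Li t.
  elim => [[j x]|p IHp q IHq|p IHp q IHq].
  - by rewrite /evL /evalM /= Hhe.
  - rewrite /evL /evalM /= (proj1 (proj2 Hh)); rewrite -/(evalM _ _ _ _ _ e p) -/(evalM _ _ _ _ _ e q).
    rewrite -/(evL p) -/(evL q) IHp IHq; exact: Mmeet_cls.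
  - rewrite /evL /evalM /= (proj2 (proj2 Hh)); rewrite -/(evalM _ _ _ _ _ e p) -/(evalM _ _ _ _ _ e q).
    rewrite -/(evL p) -/(evL q) IHp IHq; exact: Mjoin_cls.
split.
- have [h0 [_ [_ Hu]]] := (proj2 Hcop) _ L e (proj1 Hcop).
  move=> y; have E1 := Hu (fun x => x) (zhom_id _ L) (fun i x => erefl) y.
  have E2 := Hu (fun x => gM (h x)) (zhom_comp _ _ _ _ _ _ h gM Hh gM_hom) _ y.
  rewrite /= in E1 E2; rewrite -/(gM (h y)) E2 //.
  move=> i x; rewrite Hhe /gM /fM evL_rep /evL /evalM /=; done.
- move=> s t Hst; have := zhom_mono _ _ _ _ h Hh _ _ Hst; rewrite !heval.
  by move/Mle_cls.
Qed.

End Coprod.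

Set Implicit Arguments.
Section Main.
Context (I : Type) (d : I -> Order.disp_t) (Li : forall i, bLatticeType (d i))
  (HUC : forall i, upper_continuous (Li i)).
Context (dA : Order.disp_t) (Lam : porderType dA)
  (Hdir : up_directed (fun l m : Lam => l <= m) (fun _ => True))
  (al : Lam -> forall (i : I) (n : nat), Li i)
  (Hiso : forall l m : Lam, l <= m -> forall i n, al l i n <= al m i n)
  (a : forall (i : I) (n : nat), Li i)
  (Hsup : is_lub (fun x y : forall (i : I) (n : nat), Li i => forall i n, x i n <= y i n)
                 (fun x => exists l, x = al l) a).

Fixpoint tr (b : forall (i : I) (n : nat), Li i) (p : lterm (I * nat)) : Term Li :=
  match p with
  | LVar v => @LVar (V Li) (existT _ v.1 (b v.1 v.2))
  | LMeet p q => LMeet (tr b p) (tr b q)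
  | LJoin p q => LJoin (tr b p) (tr b q)
  end.

Lemma al_le_a l i n : al l i n <= a i n.
Proof. exact: (proj1 Hsup (al l) (ex_intro _ l erefl)). Qed.

Lemma comp_lub i n c : (forall l, al l i n <= c) -> a i n <= c.
Proof.
move=> Hc.
pose b : forall (j : I) (m : nat), Li j := fun j m =>
  match pselect (i = j) with
  | left E => if m == n then eq_rect i (fun k => Li k) c j E else a j m
  | right _ => a j m
  end.
have Hb : forall j m, b j m = (match pselect (i = j) with
  | left E => if m == n then eq_rect i (fun k => Li k) c j E else a j m
  | right _ => a j m end) by [].
have Hub : forall x, (exists l, x = al l) -> forall j m, x j m <= b j m.
  move=> x [l ->] j m; rewrite Hb; case: pselect => [E|_]; last exact: al_le_a.
  destruct E => /=; case: eqP => [->|_]; [exact: Hc | exact: al_le_a].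
have := proj2 Hsup b Hub i n; rewrite Hb; case: pselect => [E|]; last by [].
by rewrite (Prop_irrelevance E erefl) /= eqxx.
Qed.

Lemma tr_mono b b' p : (forall i n, b i n <= b' i n) -> tle (tr b p) (tr b' p).
Proof.
move=> H; elim: p => [[i n]|p IHp q IHq|p IHp q IHq] /=.
- exact: tle_var.
- exact: tle_meet_mono.
- exact: tle_join_mono.
Qed.

Lemma tr_al_mono l m p : l <= m -> tle (tr (al l) p) (tr (al m) p).
Proof. move=> H; apply: tr_mono; exact: Hiso. Qed.
Lemma tr_al_a l p : tle (tr (al l) p) (tr a p).
Proof. apply: tr_mono; exact: al_le_a. Qed.

Definition downclosed (P : Lam -> Prop) := forall l m, l <= m -> P m -> P l.

Lemma dc_or P Q : downclosed P -> downclosed Q -> downclosed (fun l => P l \/ Q l).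
Proof. by move=> HP HQ l m Hlm [H|H]; [left; exact: HP H | right; exact: HQ H]. Qed.

Lemma dc2 P Q : downclosed P -> downclosed Q -> (forall l, P l \/ Q l) ->
  (forall l, P l) \/ (forall l, Q l).
Proof.
move=> HP HQ H.
case: (pselect (forall l, P l)) => [|nP]; first by left.
right => l; case: (pselect (Q l)) => // nQ; exfalso.
have [l1 Hl1] : exists l1, ~ P l1.
  case: (pselect (exists l1, ~ P l1)) => // nE; exfalso; apply: nP => l2.
  case: (pselect (P l2)) => // H2; exfalso; apply: nE; by exists l2.
have [z [_ [H1 H2]]] := proj2 Hdir l1 l Logic.I Logic.I.
case: (H z) => Hz; [apply: Hl1; exact: HP H1 Hz | apply: nQ; exact: HQ H2 Hz].
Qed.

Lemma dclist (l : list I) (P : I -> Lam -> Prop) : (forall i, downclosed (P i)) ->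
  (forall x, exists i, List.In i l /\ P i x) -> exists i, List.In i l /\ forall x, P i x.
Proof.
move=> HP; elim: l => [|i l IH] H.
  have [x _] := proj1 Hdir; by have [i [[] _]] := H x.
have H' : forall x, P i x \/ exists j, List.In j l /\ P j x.
  move=> x; have [j [[<-|Hj] Hx]] := H x; [by left | right; by exists j].
have dcE : downclosed (fun x => exists j, List.In j l /\ P j x).
  by move=> x y Hxy [j [Hj Hy]]; exists j; split => //; exact: HP Hxy Hy.
case: (dc2 (HP i) dcE H') => [Hi|Hl]; first by exists i; split => //; left.
have [j [Hj Hx]] := IH Hl; exists j; split => //; by right.
Qed.

Fixpoint idx (p : lterm (I * nat)) : list I :=
  match p with
  | LVar v => [:: v.1]
  | LMeet p q => idx p ++ idx q
  | LJoin p q => idx p ++ idx q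
  end.

Lemma idx_ne p : exists i, List.In i (idx p).
Proof.
elim: p => [[i n]|p [i Hi] q _|p [i Hi] q _] /=; first by exists i; left.
all: by exists i; apply: List.in_or_app; left.
Qed.

Definition flagged (t : Term Li) := forall k, U t k = Some \bot.

Lemma norm_flag (W : Ucov Li) : (exists k, W k = Some \bot) -> forall k, norm W k = Some \bot.
Proof. move=> H k; rewrite /norm; by destruct (pselect _). Qed.

Lemma U_idx b p i x : U (tr b p) i = Some x -> flagged (tr b p) \/ List.In i (idx p).
Proof.
elim: p i x => [[j n]|p IHp q IHq|p IHp q IHq] i x /=.
- case: eqP => [Hb|_] /=; first by left => k /=; rewrite Hb eqxx.
  move=> Hp; have E := proj_some Hp; apply: or_intror; apply: or_introl; by move: E; case.
- case: (pselect (exists k, omeet (U (tr b p) k) (U (tr b q) k) = Some \bot)) => Hz.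
    by left => k; apply: norm_flag.
  rewrite /norm; destruct (pselect _) => //.
  rewrite /=; case Ep: (U (tr b p) i) => [y|]; case Eq: (U (tr b q) i) => [z|] //= _.
  + case: (IHp _ _ Ep) => [Fp|Hi]; last by right; apply: List.in_or_app; left.
    exfalso; apply: Hz; exists i; by rewrite Fp omeet_botl.
  + case: (IHp _ _ Ep) => [Fp|Hi]; last by right; apply: List.in_or_app; left.
    exfalso; apply: Hz; exists i; by rewrite Fp omeet_botl.
  + case: (IHq _ _ Eq) => [Fq|Hi]; last by right; apply: List.in_or_app; right.
    exfalso; apply: Hz; exists i; by rewrite Fq omeet_botr.
- case Ep: (U (tr b p) i) => [y|]; case Eq: (U (tr b q) i) => [z|] //= _.
  case: (IHp _ _ Ep) => [Fp|Hi]; last by right; apply: List.in_or_app; left.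
  case: (IHq _ _ Eq) => [Fq|Hi]; last by right; apply: List.in_or_app; right.
  by left => k; rewrite /= Fp Fq /= joinxx.
Qed.


Lemma Umono p i l m : l <= m -> oleq (U (tr (al l) p) i) (U (tr (al m) p) i).
Proof. move=> H; exact: (proj2 (cover_mono (tr_al_mono p H)) i). Qed.
Lemma Uamono p i l : oleq (U (tr (al l) p) i) (U (tr a p) i).
Proof. exact: (proj2 (cover_mono (tr_al_a l p)) i). Qed.
Lemma None_up p i l m : l <= m -> U (tr (al l) p) i = None -> U (tr (al m) p) i = None.
Proof. move=> H E; apply: oleq_None; rewrite -E; exact: Umono. Qed.

Lemma omeetN (dd : Order.disp_t) (X : bLatticeType dd) (x : option X) : omeet x None = x.
Proof. by case: x. Qed.
Lemma ojoinN (dd : Order.disp_t) (X : bLatticeType dd) (x : option X) : ojoin x None = None.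
Proof. by case: x. Qed.

Lemma up2 (l1 l2 : Lam) : exists m, l1 <= m /\ l2 <= m.
Proof. by have [m [_ [H1 H2]]] := proj2 Hdir l1 l2 Logic.I Logic.I; exists m. Qed.

Definition Pl p i :=
  (forall c, (forall l, oleq (U (tr (al l) p) i) (Some c)) -> oleq (U (tr a p) i) (Some c)) /\
  (U (tr a p) i = None -> exists l, U (tr (al l) p) i = None).

Lemma MeetLub p q k : Pl p k -> Pl q k -> forall c,
  (forall l, oleq (omeet (U (tr (al l) p) k) (U (tr (al l) q) k)) (Some c)) ->
  oleq (omeet (U (tr a p) k) (U (tr a q) k)) (Some c).
Proof.
move=> [Bp Cp] [Bq Cq] c H.
case Ep: (U (tr a p) k) => [x|]; case Eq: (U (tr a q) k) => [y|].
- have Hpl : forall l, exists xl, U (tr (al l) p) k = Some xl /\ xl <= x.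
    move=> l; apply: oleq_Some; rewrite -Ep; exact: Uamono.
  have Hql : forall l, exists yl, U (tr (al l) q) k = Some yl /\ yl <= y.
    move=> l; apply: oleq_Some; rewrite -Eq; exact: Uamono.
  pose X := fun z => exists l, U (tr (al l) p) k = Some z.
  pose Y := fun z => exists l, U (tr (al l) q) k = Some z.
  have lubX : is_lub (fun u v => u <= v) X x.
    split; first by move=> z [l Hz]; have [xl [E1 E2]] := Hpl l; rewrite Hz in E1; case: E1 => ->.
    move=> u Hu; have := Bp u; rewrite Ep; apply => l.
    have [xl [E1 _]] := Hpl l; rewrite E1; apply: Hu; by exists l.
  have lubY : is_lub (fun u v => u <= v) Y y.
    split; first by move=> z [l Hz]; have [yl [E1 E2]] := Hql l; rewrite Hz in E1; case: E1 => ->.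
    move=> u Hu; have := Bq u; rewrite Eq; apply => l.
    have [yl [E1 _]] := Hql l; rewrite E1; apply: Hu; by exists l.
  have dirX : up_directed (fun u v => u <= v) X.
    split; first by have [l0 _] := proj1 Hdir; have [xl [E1 _]] := Hpl l0; exists xl, l0.
    move=> z1 z2 [l1 H1] [l2 H2]; have [m [M1 M2]] := up2 l1 l2.
    have [xm [Em _]] := Hpl m; exists xm; split; first by exists m.
    have := Umono p k M1; have := Umono p k M2; rewrite H1 H2 Em /= => A B; by split.
  have dirY : up_directed (fun u v => u <= v) Y.
    split; first by have [l0 _] := proj1 Hdir; have [yl [E1 _]] := Hql l0; exists yl, l0.
    move=> z1 z2 [l1 H1] [l2 H2]; have [m [M1 M2]] := up2 l1 l2.
    have [ym [Em _]] := Hql m; exists ym; split; first by exists m.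
    have := Umono q k M1; have := Umono q k M2; rewrite H1 H2 Em /= => A B; by split.
  change (x `&` y <= c).
  apply: (proj2 (@HUC k x Y y dirY lubY)) => w [y' [[l' Hy'] ->]].
  rewrite meetC; apply: (proj2 (@HUC k y' X x dirX lubX)) => w' [x' [[l'' Hx'] ->]].
  have [m [M1 M2]] := up2 l' l''.
  have [xm [Exm _]] := Hpl m; have [ym [Eym _]] := Hql m.
  have := H m; rewrite Exm Eym /= => Hc.
  have A : x' <= xm by have := Umono p k M2; rewrite Hx' Exm.
  have B : y' <= ym by have := Umono q k M1; rewrite Hy' Eym.
  apply: le_trans Hc; rewrite meetC; exact: leI2.
- rewrite omeetN; rewrite -Ep; apply: Bp => l.
  have [l1 Hl1] := Cq Eq; have [m [M1 M2]] := up2 l l1.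
  apply: oleq_trans (Umono p k M1) _; have := H m; by rewrite (None_up M2 Hl1) omeetN.
- change (oleq (Some y) (Some c)); rewrite -Eq; apply: Bq => l.
  have [l1 Hl1] := Cp Ep; have [m [M1 M2]] := up2 l l1.
  apply: oleq_trans (Umono q k M1) _; have := H m; by rewrite (None_up M2 Hl1).
- have [l1 Hl1] := Cp Ep; have [l2 Hl2] := Cq Eq; have [m [M1 M2]] := up2 l1 l2.
  have := H m; by rewrite (None_up M1 Hl1) (None_up M2 Hl2).
Qed.

Lemma ex_nz j n : a j n <> \bot -> exists l, al l j n <> \bot.
Proof.
move=> Ha; case: (pselect (exists l, al l j n <> \bot)) => // nE; exfalso; apply: Ha.
apply/eqP; rewrite -lex0; apply: comp_lub => l.
case: (pselect (al l j n = \bot)) => [->|Hl]; first exact: le_refl.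
by exfalso; apply: nE; exists l.
Qed.

Lemma UtrV b j n i : U (tr b (LVar (j, n))) i =
  if b j n == \bot then Some \bot else proj i (existT (fun k => Li k) j (b j n)).
Proof. by rewrite /=; case: eqP. Qed.

Lemma Wz b p q k : omeet (U (tr b p) k) (U (tr b q) k) = Some \bot ->
  exists k', List.In k' (idx p ++ idx q) /\ omeet (U (tr b p) k') (U (tr b q) k') = Some \bot.
Proof.
have Fp : flagged (tr b p) -> exists k', List.In k' (idx p ++ idx q) /\
    omeet (U (tr b p) k') (U (tr b q) k') = Some \bot.
  move=> F; have [k0 Hk0] := idx_ne p; exists k0; split; first by apply: List.in_or_app; left.
  by rewrite F omeet_botl.
have Fq : flagged (tr b q) -> exists k', List.In k' (idx p ++ idx q) /\
    omeet (U (tr b p) k') (U (tr b q) k') = Some \bot.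
  move=> F; have [k0 Hk0] := idx_ne q; exists k0; split; first by apply: List.in_or_app; right.
  by rewrite F omeet_botr.
case Ep: (U (tr b p) k) => [x|]; case Eq: (U (tr b q) k) => [y|] //= H.
- case: (U_idx Ep) => [F|Hi]; first exact: Fp.
  exists k; split; first by apply: List.in_or_app; left.
  by rewrite Ep Eq.
- case: H => Hx; subst x; apply: Fp; exact: Z1 Ep.
- case: H => Hy; subst y; apply: Fq; exact: Z1 Eq.
Qed.

Lemma Plub p : forall i, Pl p i.
Proof.
elim: p => [[j n]|p IHp q IHq|p IHp q IHq] i.
- split.
  + move=> c H; rewrite UtrV; case: eqP => [_|Ha]; first exact: oleq_bot0.
    case: (pselect (j = i)) => [E|E].
      subst j; rewrite proj_same; apply: comp_lub => l.
      have := H l; rewrite UtrV; case: eqP => [->|_]; first by rewrite le0x.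
      by rewrite proj_same.
    rewrite proj_diff //; have [l Hl] := ex_nz Ha; have := H l; rewrite UtrV.
    by case: eqP => // _; rewrite proj_diff.
  + rewrite UtrV; case: eqP => [_|Ha] //.
    case: (pselect (j = i)) => [E|E]; first by subst j; rewrite proj_same.
    move=> _; have [l Hl] := ex_nz Ha; exists l; rewrite UtrV.
    by case: eqP => // _; rewrite proj_diff.
- pose W b k := omeet (U (tr b p) k) (U (tr b q) k).
  have UM : forall b, U (tr b (LMeet p q)) i = norm (W b) i by [].
  have dcA : downclosed (fun l => exists k, W (al l) k = Some \bot).
    move=> l m Hlm [k Hk]; exists k; apply: oleq_bot; rewrite -Hk.
    exact: omeet_mono (Umono p k Hlm) (Umono q k Hlm).
  have Zlim : (forall l, exists k, W (al l) k = Some \bot) -> exists k, W a k = Some \bot.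
    move=> H.
    have H' : forall l, exists k, List.In k (idx p ++ idx q) /\ W (al l) k = Some \bot.
      move=> l; have [k Hk] := H l; exact: Wz Hk.
    have dcP : forall k, downclosed (fun l => W (al l) k = Some \bot).
      move=> k l m Hlm Hk; apply: oleq_bot; rewrite -Hk.
      exact: omeet_mono (Umono p k Hlm) (Umono q k Hlm).
    have [k [_ Hk]] := dclist dcP H'.
    have HH : forall l, oleq (omeet (U (tr (al l) p) k) (U (tr (al l) q) k)) (Some (\bot : Li k)).
      move=> l; have := Hk l; rewrite /W => ->; exact: oleq_refl.
    exists k; apply: oleq_bot; exact: (MeetLub (IHp k) (IHq k) HH).
  split.
  + move=> c H; rewrite UM.
    have dcB : downclosed (fun l => oleq (W (al l) i) (Some c)).
      move=> l m Hlm Hm; apply: oleq_trans Hm.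
      exact: omeet_mono (Umono p i Hlm) (Umono q i Hlm).
    have HAB : forall l, (exists k, W (al l) k = Some \bot) \/ oleq (W (al l) i) (Some c).
      move=> l; have := H l; rewrite UM /norm.
      destruct (pselect _) as [Hz|Hz]; first by left.
      by right.
    case: (dc2 dcA dcB HAB) => [HA|HB].
      rewrite (norm_flag (Zlim HA)); exact: oleq_bot0.
    apply: oleq_trans (norm_le _ _) _; rewrite /W.
    have HB' : forall l, oleq (omeet (U (tr (al l) p) i) (U (tr (al l) q) i)) (Some c) by [].
    exact: (MeetLub (IHp i) (IHq i) HB').
  + rewrite UM => Hn.
    case: (pselect (exists k, W a k = Some \bot)) => Hz.
      by rewrite (norm_flag Hz) in Hn.
    move: Hn; rewrite /norm; destruct (pselect _) as [Hz'|Hz'']; first by [].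
    move=> /= H0.
    have H1 : omeet (U (tr a p) i) (U (tr a q) i) = None by exact: H0.
    move: H1; case Ep: (U (tr a p) i) => [x|]; case Eq: (U (tr a q) i) => [y|] => H2; try discriminate H2.
    have [l1 Hl1] := proj2 (IHp i) Ep; have [l2 Hl2] := proj2 (IHq i) Eq.
    have [l3 Hl3] : exists l3, ~ exists k, W (al l3) k = Some \bot.
      case: (pselect (exists l3, ~ exists k, W (al l3) k = Some \bot)) => // nE.
      exfalso; apply: Hz; apply: Zlim => l.
      case: (pselect (exists k, W (al l) k = Some \bot)) => // H.
      by exfalso; apply: nE; exists l.
    have [m12 [M1 M2]] := up2 l1 l2; have [m [M3 M4]] := up2 m12 l3.
    exists m; change (norm (W (al m)) i = None); rewrite /norm; destruct (pselect _) as [HA|HnA].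
      by exfalso; apply: Hl3; exact: dcA M4 HA.
    change (omeet (U (tr (al m) p) i) (U (tr (al m) q) i) = None).
    by rewrite (None_up (le_trans M1 M3) Hl1) (None_up (le_trans M2 M3) Hl2).
- split.
  + move=> c H; apply: ojoin_lub.
      apply: (proj1 (IHp i)) => l; exact: oleq_trans (ojoin_uel _ _) (H l).
    apply: (proj1 (IHq i)) => l; exact: oleq_trans (ojoin_uer _ _) (H l).
  + change (ojoin (U (tr a p) i) (U (tr a q) i) = None ->
      exists l, ojoin (U (tr (al l) p) i) (U (tr (al l) q) i) = None).
    case Ep: (U (tr a p) i) => [x|]; case Eq: (U (tr a q) i) => [y|] //= _.
    * have [l Hl] := proj2 (IHq i) Eq; exists l; by rewrite Hl ojoinN.
    * have [l Hl] := proj2 (IHp i) Ep; exists l; by rewrite Hl.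
    * have [l Hl] := proj2 (IHp i) Ep; exists l; by rewrite Hl.
Qed.


Lemma meetr_inv (s t0 t1 : Term Li) : tle s (LMeet t0 t1) -> tle s t0 /\ tle s t1.
Proof.
move=> H; split; apply: tle_trans H _; [apply: tle_meetl0 | apply: tle_meetl1]; exact: tle_refl.
Qed.

Lemma meet_inv (x y u : Term Li) : tle (LMeet x y) u ->
  (exists i z, U (LMeet x y) i = Some z /\ z <= lc i u) \/ tle x u \/ tle y u \/
  (exists u0 u1, u = LJoin u0 u1 /\ (tle (LMeet x y) u0 \/ tle (LMeet x y) u1)) \/
  (exists u0 u1, u = LMeet u0 u1).
Proof.
move=> H; inversion H; subst.
- left; by exists i, u0.
- by right; left.
- by right; right; left.
- by right; right; right; left; exists q0, q1; split => //; left.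
- by right; right; right; left; exists q0, q1; split => //; right.
- by right; right; right; right; exists q0, q1.
Qed.

Lemma dc_tle p u : downclosed (fun l => tle (tr (al l) p) u).
Proof. move=> l m Hlm Hm; exact: tle_trans (tr_al_mono p Hlm) Hm. Qed.

Lemma cov_or p u (O : Lam -> Prop) : downclosed O ->
  (forall l, O l \/ exists i z, U (tr (al l) p) i = Some z /\ z <= lc i u) ->
  (forall l, O l) \/ tle (tr a p) u.
Proof.
move=> dcO H.
pose C := fun l => exists i, List.In i (idx p) /\ oleq (U (tr (al l) p) i) (Some (lc i u)).
have HC : forall l, O l \/ C l.
  move=> l; case: (H l) => [HO|[i [z [Hz Hzu]]]]; first by left.
  right; case: (U_idx Hz) => [F|Hi].
    have [k0 Hk0] := idx_ne p; exists k0; split => //; rewrite F; exact: oleq_bot0.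
  by exists i; split => //; rewrite Hz.
have dcC : downclosed C.
  move=> l m Hlm [i [Hi Hm]]; exists i; split => //; exact: oleq_trans (Umono p i Hlm) Hm.
case: (dc2 dcO dcC HC) => [HO|HCl]; first by left.
right.
have dcP : forall i, downclosed (fun l => oleq (U (tr (al l) p) i) (Some (lc i u))).
  move=> i l m Hlm Hm; exact: oleq_trans (Umono p i Hlm) Hm.
have [i [_ Hi]] := dclist dcP HCl.
apply: (tle_cov' (i := i) (c := lc i u)); last exact: le_refl.
exact: (proj1 (Plub p i)).
Qed.

Lemma Tmain p : forall u, (forall l, tle (tr (al l) p) u) -> tle (tr a p) u.
Proof.
elim: p => [[i n]|p0 IH0 p1 IH1|p0 IH0 p1 IH1] u H.
- have Hc : a i n <= lc i u.
    apply: comp_lub => l; have [A _] := cover_mono (H l); have := A i.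
    by rewrite /= proj_same.
  apply: (tle_cov' (i := i) (c := a i n)) => //.
  rewrite /=; case: eqP => [->|_] /=; first exact: le_refl.
  rewrite proj_same; exact: le_refl.
- elim: u H => [s|u0 IHu0 u1 IHu1|u0 IHu0 u1 IHu1] H.
  + have dcO : downclosed (fun l => tle (tr (al l) p0) (LVar s) \/ tle (tr (al l) p1) (LVar s)).
      by apply: dc_or; apply: dc_tle.
    have HO : forall l, (tle (tr (al l) p0) (LVar s) \/ tle (tr (al l) p1) (LVar s)) \/
        exists i z, U (tr (al l) (LMeet p0 p1)) i = Some z /\ z <= lc i (LVar s).
      move=> l; case: (meet_inv (H l)) => [Hc|[H0|[H1|[[u0 [u1 [E _]]]|[u0 [u1 E]]]]]] //.
      * by right.
      * by left; left.
      * by left; right.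
    case: (cov_or dcO HO) => [HA|] //.
    case: (dc2 (@dc_tle p0 (LVar s)) (@dc_tle p1 (LVar s)) HA) => [A|A].
      by apply: tle_meetl0; apply: IH0.
    by apply: tle_meetl1; apply: IH1.
  + apply: tle_meetr; [apply: IHu0 | apply: IHu1] => l; by have [A B] := meetr_inv (H l).
  + pose u := LJoin u0 u1.
    have dcO : downclosed (fun l => (tle (tr (al l) p0) u \/ tle (tr (al l) p1) u) \/
        (tle (tr (al l) (LMeet p0 p1)) u0 \/ tle (tr (al l) (LMeet p0 p1)) u1)).
      by apply: dc_or; apply: dc_or; apply: dc_tle.
    have HO : forall l, ((tle (tr (al l) p0) u \/ tle (tr (al l) p1) u) \/
        (tle (tr (al l) (LMeet p0 p1)) u0 \/ tle (tr (al l) (LMeet p0 p1)) u1)) \/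
        exists i z, U (tr (al l) (LMeet p0 p1)) i = Some z /\ z <= lc i u.
      move=> l; case: (meet_inv (H l)) => [Hc|[H0|[H1|[[v0 [v1 [E Hv]]]|[v0 [v1 E]]]]]] //.
      * by right.
      * by left; left; left.
      * by left; left; right.
      * by move: Hv; case: E => <- <- Hv; left; right.
    case: (cov_or dcO HO) => [HA|] //.
    have dcL : downclosed (fun l => tle (tr (al l) p0) u \/ tle (tr (al l) p1) u).
      by apply: dc_or; apply: dc_tle.
    have dcR : downclosed (fun l => tle (tr (al l) (LMeet p0 p1)) u0 \/ tle (tr (al l) (LMeet p0 p1)) u1).
      by apply: dc_or; apply: dc_tle.
    case: (dc2 dcL dcR HA) => [A|A].
      case: (dc2 (@dc_tle p0 u) (@dc_tle p1 u) A) => [B|B].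
        by apply: tle_meetl0; apply: IH0.
      by apply: tle_meetl1; apply: IH1.
    case: (dc2 (@dc_tle (LMeet p0 p1) u0) (@dc_tle (LMeet p0 p1) u1) A) => [B|B].
      by apply: tle_joinr0; apply: IHu0.
    by apply: tle_joinr1; apply: IHu1.
- apply: tle_joinl; [apply: IH0 | apply: IH1] => l; by have [A B] := joinl_inv (H l).
Qed.

End Main.

Unset Implicit Arguments.
Unset Strict Implicit.

Theorem lemma4p4
  (I : Type) (d : I -> Order.disp_t) (Li : forall i, bLatticeType (d i))
  (HUC : forall i, upper_continuous (Li i))
  (dL : Order.disp_t) (L : bLatticeType dL) (e : forall i, Li i -> L)
  (Hcop : is_coproduct0 Li L e)
  (dA : Order.disp_t) (Lam : porderType dA)
  (Hdir : up_directed (fun l m : Lam => l <= m) (fun _ => True))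
  (al : Lam -> forall (i : I) (n : nat), Li i)
  (Hiso : forall l m : Lam, l <= m -> forall i n, al l i n <= al m i n)
  (a : forall (i : I) (n : nat), Li i)
  (Hsup : is_lub (fun x y : forall (i : I) (n : nat), Li i => forall i n, x i n <= y i n)
                 (fun x => exists l, x = al l) a)
  (p : lterm (I * nat)) :
  is_lub (fun x y : L => x <= y)
    (fun y => exists l, y = leval (fun v : I * nat => e v.1 (al l v.1 v.2)) p)
    (leval (fun v : I * nat => e v.1 (a v.1 v.2)) p).
Proof.
have [i0 _] := idx_ne p.
have Hev : forall b, leval (fun v : I * nat => e v.1 (b v.1 v.2)) p = evL I d Li dL L e (tr b p).
  move=> b; rewrite /evL /evalM; elim: p {i0} => [[i n]|p IHp q IHq|p IHp q IHq] //=.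
    by rewrite IHp IHq.
  by rewrite IHp IHq.
have [Hgen Hcompl] := gen_compl I d Li i0 dL L e Hcop.
split.
- move=> y [l ->]; rewrite !Hev; apply: (evL_sound _ _ _ _ _ _ Hcop).
  exact: tr_al_a Hsup l p.
- move=> u Hu; rewrite (Hgen u) Hev; apply: (evL_sound _ _ _ _ _ _ Hcop).
  apply: (Tmain HUC Hdir Hiso Hsup) => l.
  apply: Hcompl; rewrite -Hev -(Hgen u); apply: Hu; by exists l.
Qed.
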